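(* Let $G=(V,E,I,\{s,t\})$ be a grapht (possibly infinite). Suppose that $s$ is linked and that every system of edge-disjoint $st$-paths that links $s$ uses the edge $e$, where $e\in E\setminus\delta(s)$. Let $C$ be the $\trianglelefteq$-smallest Erdős–Menger $st$-cut that contains $e$. Then $C$ is tight, i.e. every linkage of $s$ is orthogonal to $C$.
   Context: Graphs may have parallel edges but no loops; all paths are finite. A grapht $(V,E,I,T)$ is a graph with a set $T$ of at least two terminal vertices; here $T=\{s,t\}$, so $T$-paths are exactly $st$-paths (paths from $s$ to $t$). $\delta(X)$ is the set of edges with exactly one end in $X$, $\delta(x)=\delta(\{x\})$; a cut is a set $\delta(X)$. For disjoint $A,B\subseteq V$, an $AB$-path has one endpoint in $A$, the other in $B$, and no inner vertex in $A\cup B$; an $AB$-cut is a cut $C$ such that $G-C$ has no $AB$-path. An edge set $C$ is orthogonal to a system $\mathcal{P}$ of edge-disjoint paths if $C$ consists of exactly one edge from each $P\in\mathcal{P}$ (and no other edges). An Erdős–Menger $st$-cut is an $st$-cut orthogonal to some system of edge-disjoint $st$-paths. For Erdős–Menger $st$-cuts $C,C'$, write $C\trianglelefteq C'$ if for every $st$-path $P$, with $<_P$ the linear order of $E(P)$ in the direction from $s$ to $t$, $\min_{<_P}(C\cap E(P))\le\min_{<_P}(C'\cap E(P))$. A system of edge-disjoint $st$-paths links $s$ if it covers $\delta(s)$; it is a linkage of $s$ if it links $s$ and every path in it contains an edge of $\delta(s)$ (i.e. it is minimal with this property); $s$ is linked if some system links it. *)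

(* Defs.v *)
From Stdlib Require Import List.
Import ListNotations.

(* A graph (V, E, I): I is the incidence relation; every edge has exactly
   two distinct ends (no loops; parallel edges allowed). *)
Record graph := mkGraph {
  vtx : Type;
  edg : Type;
  inc : edg -> vtx -> Prop;
  inc_two : forall e, exists u v, u <> v /\ forall w, inc e w <-> (w = u \/ w = v)
}.

Section Defs.
Variable G : graph.
Local Notation inc := (inc G).
Notation V := (vtx G).
Notation E := (edg G).

Definition joins (e : E) (u v : V) : Prop := inc e u /\ inc e v /\ u <> v.

Definition delta (X : V -> Prop) (e : E) : Prop :=
  exists u v, inc e u /\ inc e v /\ X u /\ ~ X v.

Definition deltav (x : V) : E -> Prop := delta (fun w => w = x).

Definition is_cut (C : E -> Prop) : Prop :=
  exists X : V -> Prop, forall e, C e <-> delta X e.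

Record path := mkPath { pstart : V; psteps : list (E * V) }.

Fixpoint walk_ok (u : V) (l : list (E * V)) : Prop :=
  match l with
  | [] => True
  | (e, v) :: l' => joins e u v /\ walk_ok v l'
  end.

Definition pverts (P : path) : list V := pstart P :: map snd (psteps P).
Definition pedges (P : path) : list E := map fst (psteps P).
Definition pend (P : path) : V := last (pverts P) (pstart P).

Definition is_path (P : path) : Prop :=
  walk_ok (pstart P) (psteps P) /\ NoDup (pverts P).

Definition stpath (s t : V) (P : path) : Prop :=
  is_path P /\ pstart P = s /\ pend P = t.

Definition is_stcut (s t : V) (C : E -> Prop) : Prop :=
  is_cut C /\ forall P, stpath s t P -> exists e, In e (pedges P) /\ C e.

Definition ed_system (s t : V) (S : path -> Prop) : Prop :=
  (forall P, S P -> stpath s t P) /\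
  (forall P Q, S P -> S Q -> P <> Q ->
     forall e, In e (pedges P) -> ~ In e (pedges Q)).

Definition orthogonal (C : E -> Prop) (S : path -> Prop) : Prop :=
  (forall P, S P -> exists e, In e (pedges P) /\ C e /\
       forall e', In e' (pedges P) -> C e' -> e' = e) /\
  (forall e, C e -> exists P, S P /\ In e (pedges P)).

Definition EM_stcut (s t : V) (C : E -> Prop) : Prop :=
  is_stcut s t C /\ exists S, ed_system s t S /\ orthogonal C S.

(* i is the index (in the s-to-t order of E(P)) of min_{<_P} (C ∩ E(P)) *)
Definition is_first (C : E -> Prop) (P : path) (i : nat) : Prop :=
  exists e, nth_error (pedges P) i = Some e /\ C e /\
    forall j e', j < i -> nth_error (pedges P) j = Some e' -> ~ C e'.

Definition cut_le (s t : V) (C C' : E -> Prop) : Prop :=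
  forall P, stpath s t P ->
    forall i i', is_first C P i -> is_first C' P i' -> i <= i'.

Definition links (s t : V) (S : path -> Prop) : Prop :=
  ed_system s t S /\
  forall e, deltav s e -> exists P, S P /\ In e (pedges P).

Definition linkage (s t : V) (S : path -> Prop) : Prop :=
  links s t S /\
  forall P, S P -> exists e, In e (pedges P) /\ deltav s e.

Definition linked (s t : V) : Prop := exists S, links s t S.

Definition uses (S : path -> Prop) (e : E) : Prop :=
  exists P, S P /\ In e (pedges P).

Definition tight (s t : V) (C : E -> Prop) : Prop :=
  forall S, linkage s t S -> orthogonal C S.

End Defs.

(* Main.v *)
Require Import Defs.
From Stdlib Require Import List Classical Lia.
Import ListNotations.

Section Gen.
Variable G : graph.
Notation V := (vtx G).
Notation E := (edg G).
Notation inc := (inc G).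
Notation joins := (joins G).

Definition endv (x : V) (l : list (E * V)) : V := last (map snd l) x.
Definition verts (x : V) (l : list (E * V)) : list V := x :: map snd l.

Inductive warc : V -> list (E * V) -> V -> E -> V -> Prop :=
| warc_here : forall x h y l, warc x ((h, y) :: l) x h y
| warc_later : forall x h' y l a h b, warc y l a h b -> warc x ((h', y) :: l) a h b.

Lemma ends_eq g a b c : joins g a b -> inc g c -> c = a \/ c = b.
Proof.
  intros [Ha [Hb Hab]] Hc.
  destruct (inc_two G g) as [u [v [Huv Hw]]].
  apply Hw in Ha; apply Hw in Hb; apply Hw in Hc.
  destruct Ha, Hb, Hc; subst; tauto.
Qed.

Lemma joins_sym g a b : joins g a b -> joins g b a.
Proof. intros [H1 [H2 H3]]; repeat split; auto. Qed.

Lemma joins_same g a b a' b' : joins g a b -> joins g a' b' ->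
  (a = a' /\ b = b') \/ (a = b' /\ b = a').
Proof.
  intros H H'.
  assert (Ha' : a' = a \/ a' = b) by (apply (ends_eq g a b); auto; apply H').
  assert (Hb' : b' = a \/ b' = b) by (apply (ends_eq g a b); auto; apply H').
  destruct H as [_ [_ Hab]]. destruct H' as [_ [_ Hab']].
  destruct Ha', Hb'; subst; tauto.
Qed.

Lemma endv_nil x : endv x [] = x.
Proof. reflexivity. Qed.

Lemma last_indep {A : Type} (a : A) l d d' : last (a :: l) d = last (a :: l) d'.
Proof.
  revert a; induction l as [|b l IH]; intros a; [reflexivity|]. exact (IH b).
Qed.

Lemma endv_cons x h y l : endv x ((h, y) :: l) = endv y l.
Proof.
  unfold endv; simpl. destruct l as [|p l]; [reflexivity|].
  simpl map. apply last_indep.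
Qed.

Lemma endv_app x l m : endv x (l ++ m) = endv (endv x l) m.
Proof.
  revert x; induction l as [|[h y] l IH]; intros x; simpl.
  - reflexivity.
  - rewrite !endv_cons. apply IH.
Qed.

Lemma endv_snoc x l h y : endv x (l ++ [(h, y)]) = y.
Proof. rewrite endv_app. reflexivity. Qed.

Lemma walk_app x l m : walk_ok G x (l ++ m) <-> walk_ok G x l /\ walk_ok G (endv x l) m.
Proof.
  revert x; induction l as [|[h y] l IH]; intros x; simpl.
  - tauto.
  - rewrite endv_cons, IH. tauto.
Qed.

Lemma verts_app x l m : verts x (l ++ m) = verts x l ++ map snd m.
Proof. unfold verts. rewrite map_app. reflexivity. Qed.

Lemma endv_in x l : In (endv x l) (verts x l).
Proof.
  revert x; induction l as [|[h y] l IH]; intros x.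
  - left; reflexivity.
  - rewrite endv_cons. right. apply IH.
Qed.

Lemma warc_app x l m a h b :
  warc x (l ++ m) a h b <-> warc x l a h b \/ warc (endv x l) m a h b.
Proof.
  revert x; induction l as [|[h' y] l IH]; intros x; simpl.
  - split; [tauto|]. intros [H|H]; [inversion H|exact H].
  - rewrite endv_cons. split.
    + intros H. inversion H as [|? ? ? ? ? ? ? Hr]; subst.
      * left; constructor.
      * apply IH in Hr. destruct Hr; [left; constructor; auto| right; auto].
    + intros [H|H].
      * inversion H; subst; [constructor|]. constructor. apply IH. left; auto.
      * constructor. apply IH. right; auto.
Qed.

Lemma warc_cons_inv x h' y l a h b : warc x ((h', y) :: l) a h b ->
  (a = x /\ h = h' /\ b = y) \/ warc y l a h b.
Proof. intros H. inversion H; subst; auto. Qed.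

Lemma warc_joins x l a h b : walk_ok G x l -> warc x l a h b -> joins h a b.
Proof.
  intros W H; induction H; simpl in W; tauto.
Qed.

Lemma warc_edge x l a h b : warc x l a h b -> In h (map fst l).
Proof. intros H; induction H; simpl; auto. Qed.

Lemma warc_va x l a h b : warc x l a h b -> In a (verts x l).
Proof. intros H; induction H; unfold verts in *; simpl in *; auto. Qed.

Lemma warc_vb x l a h b : warc x l a h b -> In b (map snd l).
Proof. intros H; induction H; simpl in *; auto. Qed.

Lemma warc_vb' x l a h b : warc x l a h b -> In b (verts x l).
Proof. intros H; right; eapply warc_vb; eauto. Qed.

Lemma in_warc x l h : In h (map fst l) -> exists a b, warc x l a h b.
Proof.
  revert x; induction l as [|[h' y] l IH]; intros x Hin; simpl in Hin.
  - contradiction.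
  - destruct Hin as [Hin|Hin].
    + subst. exists x, y. constructor.
    + destruct (IH y Hin) as [a [b Hab]]. exists a, b. constructor; auto.
Qed.

Lemma warc_split x l a h b :
  warc x l a h b <-> exists l1 l2, l = l1 ++ (h, b) :: l2 /\ endv x l1 = a.
Proof.
  split.
  - intros H; induction H.
    + exists [], l; auto.
    + destruct IHwarc as [l1 [l2 [-> <-]]]. exists ((h', y) :: l1), l2.
      split; [reflexivity|]. rewrite endv_cons; auto.
  - intros [l1 [l2 [-> <-]]]. apply warc_app. right. constructor.
Qed.

Lemma nodup_edges x l : walk_ok G x l -> NoDup (verts x l) -> NoDup (map fst l).
Proof.
  revert x; induction l as [|[h y] l IH]; intros x W N; simpl in *.
  - constructor.
  - destruct W as [J W]. unfold verts in N; simpl in N.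
    inversion N as [|? ? Nx N']; subst.
    constructor; [|apply (IH y); auto].
    intros Hin. destruct (in_warc y l h Hin) as [a [b Hab]].
    pose proof (warc_joins _ _ _ _ _ W Hab) as J2.
    pose proof (warc_va _ _ _ _ _ Hab) as Ha.
    pose proof (warc_vb' _ _ _ _ _ Hab) as Hb.
    destruct (joins_same _ _ _ _ _ J J2) as [[-> ->]|[-> ->]].
    + apply Nx; exact Ha.
    + apply Nx; exact Hb.
Qed.

Lemma warc_unique x l a h b a' b' : NoDup (map fst l) ->
  warc x l a h b -> warc x l a' h b' -> a = a' /\ b = b'.
Proof.
  intros N H; revert a' b'; induction H; intros a' b' H'; simpl in N;
  apply NoDup_cons_iff in N; destruct N as [Nh N];
  inversion H' as [|? ? ? ? ? ? ? Hr]; subst; auto.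
  - exfalso; apply Nh. eapply warc_edge; eauto.
  - exfalso; apply Nh. eapply warc_edge; eauto.
Qed.

Lemma prop_fwd (Q : V -> Prop) x l :
  (forall a h b, warc x l a h b -> Q a -> Q b) -> Q x ->
  forall w, In w (verts x l) -> Q w.
Proof.
  revert x; induction l as [|[h y] l IH]; intros x Hs Qx w Hw;
  unfold verts in Hw; simpl in Hw.
  - destruct Hw; [subst; auto|contradiction].
  - destruct Hw as [<-|Hw]; auto.
    apply (IH y); auto.
    + intros a h' b Hab. apply (Hs a h' b). constructor; auto.
    + apply (Hs x h y); auto. constructor.
Qed.

Lemma prop_bwd (Q : V -> Prop) x l :
  (forall a h b, warc x l a h b -> Q b -> Q a) -> Q (endv x l) ->
  forall w, In w (verts x l) -> Q w.
Proof.
  revert x; induction l as [|[h y] l IH]; intros x Hs Qe w Hw;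
  unfold verts in Hw; simpl in Hw; rewrite ?endv_cons in Qe.
  - destruct Hw; [subst; auto|contradiction].
  - assert (Hall : forall w, In w (verts y l) -> Q w).
    { apply IH; auto. intros a h' b Hab. apply (Hs a h' b). constructor; auto. }
    destruct Hw as [<-|Hw].
    + apply (Hs x h y). constructor. apply Hall. left; auto.
    + apply Hall. exact Hw.
Qed.

Lemma crossing (Y : V -> Prop) x l : Y x -> ~ Y (endv x l) ->
  exists a h b, warc x l a h b /\ Y a /\ ~ Y b.
Proof.
  intros Yx NY.
  destruct (classic (exists a h b, warc x l a h b /\ Y a /\ ~ Y b)) as [H|H]; auto.
  exfalso. apply NY. apply (prop_fwd Y x l); auto.
  - intros a h b Hab Ya. apply NNPP. intro Nb. apply H. exists a, h, b; auto.
  - apply endv_in.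
Qed.

Lemma prefix_at x l y : In y (verts x l) -> exists l1 l2, l = l1 ++ l2 /\ endv x l1 = y.
Proof.
  revert x; induction l as [|[h z] l IH]; intros x Hin; unfold verts in Hin; simpl in Hin.
  - destruct Hin as [<-|[]]. exists [], []; auto.
  - destruct Hin as [<-|Hin].
    + exists [], ((h, z) :: l); auto.
    + destruct (IH z Hin) as [l1 [l2 [-> <-]]].
      exists ((h, z) :: l1), l2. split; auto. rewrite endv_cons; auto.
Qed.

Lemma last_in_set (Y : V -> Prop) x l : Y x ->
  exists l1 l2, l = l1 ++ l2 /\ Y (endv x l1) /\ forall w, In w (map snd l2) -> ~ Y w.
Proof.
  intros Yx. induction l as [|[h y] l IH] using rev_ind.
  - exists [], []. simpl. auto.
  - destruct (classic (Y y)) as [Yy|Ny].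
    + exists (l ++ [(h, y)]), []. rewrite app_nil_r, endv_snoc. simpl; auto.
    + destruct IH as [l1 [l2 [-> [H1 H2]]]].
      exists l1, (l2 ++ [(h, y)]). rewrite app_assoc. repeat split; auto.
      intros w. rewrite map_app, in_app_iff. simpl. intros [Hw|[<-|[]]]; auto.
Qed.

Lemma first_split (C : E -> Prop) (l : list (E * V)) : (exists h, In h (map fst l) /\ C h) ->
  exists l1 f y l2, l = l1 ++ (f, y) :: l2 /\ C f /\ forall h, In h (map fst l1) -> ~ C h.
Proof.
  induction l as [|[h y] l IH]; intros [h0 [Hin Ch]]; simpl in Hin.
  - contradiction.
  - destruct (classic (C h)) as [Cy|Cn].
    + exists [], h, y, l. simpl. auto.
    + destruct Hin as [->|Hin]; [contradiction|].
      destruct IH as [l1 [f [y' [l2 [-> [Cf Hn]]]]]]; eauto.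
      exists ((h, y) :: l1), f, y', l2. simpl. repeat split; auto.
      intros h' [<-|Hh]; auto.
Qed.

Lemma first_split_unique (C : E -> Prop) (l1 : list (E * V)) f y l2 l1' f' y' l2' :
  l1 ++ (f, y) :: l2 = l1' ++ (f', y') :: l2' -> C f -> C f' ->
  (forall h, In h (map fst l1) -> ~ C h) -> (forall h, In h (map fst l1') -> ~ C h) ->
  l1 = l1' /\ f = f' /\ y = y' /\ l2 = l2'.
Proof.
  revert l1'; induction l1 as [|[h z] l1 IH]; intros l1' Heq Cf Cf' N N';
  destruct l1' as [|[h' z'] l1']; simpl in Heq; injection Heq.
  - intros; subst; auto.
  - intros _ E1 E2. exfalso. apply (N' f); simpl; auto.
  - intros _ E1 E2. exfalso. apply (N f'); simpl; auto.
  - intros E0 E1 E2. subst h' z'. destruct (IH l1') as [-> [-> [-> ->]]]; auto.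
    + intros; apply N; simpl; auto.
    + intros; apply N'; simpl; auto.
Qed.

Lemma nodup_app_disj {A : Type} (l m : list A) a : NoDup (l ++ m) -> In a l -> ~ In a m.
Proof.
  induction l as [|b l IH]; simpl; intros N Hl Hm; [contradiction|].
  apply NoDup_cons_iff in N; destruct N as [N1 N]. destruct Hl as [<-|Hl].
  - apply N1. apply in_app_iff; auto.
  - eapply IH; eauto.
Qed.

Lemma pend_endv P : pend G P = endv (pstart G P) (psteps G P).
Proof.
  unfold pend, pverts, endv. destruct (psteps G P) as [|p l]; simpl; auto.
Qed.



Notation pedges := (Defs.pedges G).
Notation pverts := (Defs.pverts G).
Notation pstart := (Defs.pstart G).
Notation psteps := (Defs.psteps G).
Notation pend := (Defs.pend G).
Notation is_path := (Defs.is_path G).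
Notation stpath := (Defs.stpath G).

Definition arcP (P : path G) a h b := warc (pstart P) (psteps P) a h b.

Lemma arcP_edge P a h b : arcP P a h b -> In h (pedges P).
Proof. apply warc_edge. Qed.

Lemma path_nodup_edges P : is_path P -> NoDup (pedges P).
Proof. intros [W N]. eapply nodup_edges; eauto. Qed.

Lemma arc_head_not_start P a h b : is_path P -> arcP P a h b -> b <> pstart P.
Proof.
  intros [W N] H E. apply warc_vb in H. unfold pverts in N.
  apply NoDup_cons_iff in N. destruct N as [N _]. apply N. rewrite <- E. exact H.
Qed.

Lemma verts_snd_not_start P w : is_path P -> In w (map snd (psteps P)) -> w <> pstart P.
Proof.
  intros [W N] H E. unfold pverts in N.
  apply NoDup_cons_iff in N. destruct N as [N _]. apply N. rewrite <- E. exact H.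
Qed.

Lemma first_edge_delta s P h : is_path P -> pstart P = s -> In h (pedges P) ->
  deltav G s h -> exists y l, psteps P = (h, y) :: l.
Proof.
  intros HP Hs Hin Hd. unfold deltav, delta in Hd.
  destruct Hd as [u [v [Hu [Hv [Eu Nv]]]]]. subst u.
  destruct (in_warc (pstart P) (psteps P) h Hin) as [a [b Hab]].
  pose proof (warc_joins _ _ _ _ _ (proj1 HP) Hab) as J.
  pose proof (arc_head_not_start P a h b HP Hab) as Nb.
  destruct (ends_eq h a b s J Hu) as [Ea|Eb]; [|congruence].
  apply warc_split in Hab. destruct Hab as [l1 [l2 [El Ea']]].
  destruct l1 as [|[h1 y1] l1].
  - exists b, l2. exact El.
  - exfalso. rewrite endv_cons in Ea'.
    assert (Hin2 : In a (map snd (psteps P))).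
    { rewrite El. simpl. rewrite <- Ea'. pose proof (endv_in y1 l1) as Hx.
      unfold verts in Hx. destruct Hx as [Hx|Hx].
      - left; auto.
      - right. rewrite map_app, in_app_iff. auto. }
    apply (verts_snd_not_start P a HP Hin2). congruence.
Qed.

Section Aug.
Variables s t : V.
Variable e : E.
Hypothesis Hst : s <> t.

Definition resid (U : path G -> Prop) a b h : Prop :=
  joins h a b /\ h <> e /\
  ((forall P, U P -> ~ In h (pedges P)) \/ (exists P, U P /\ arcP P b h a)).

Definition rwalk U x W := forall a h b, warc x W a h b -> resid U a b h.

Definition edisj (U : path G -> Prop) :=
  forall P Q, U P -> U Q -> P <> Q -> forall g, In g (pedges P) -> ~ In g (pedges Q).

Definition inv (U : path G -> Prop) (D : path G) (x : V) : Prop :=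
  U D /\ is_path D /\ pstart D = s /\ pend D = x /\ x <> s /\
  (forall P, U P -> P <> D -> stpath s t P) /\
  edisj U /\
  (forall h, deltav G s h -> exists P, U P /\ In h (pedges P)) /\
  (forall P, U P -> ~ In e (pedges P)).

Lemma mk_inv U D x : U D -> is_path D -> pstart D = s -> pend D = x -> x <> s ->
  (forall P, U P -> P <> D -> stpath s t P) -> edisj U ->
  (forall h, deltav G s h -> exists P, U P /\ In h (pedges P)) ->
  (forall P, U P -> ~ In e (pedges P)) -> inv U D x.
Proof. intros. unfold inv. tauto. Qed.

Lemma mono U U' g a b h :
  (forall R, U' R -> forall a h b, arcP R a h b -> h = g \/ exists Q, U Q /\ arcP Q a h b) ->
  edisj U -> (forall P, U P -> is_path P) ->
  h <> g -> resid U a b h -> resid U' a b h.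
Proof.
  intros Hm Hd Hp Hg [J [He Hr]]. split; [auto|split; [auto|]].
  destruct (classic (exists R, U' R /\ In h (pedges R))) as [[R [UR Hin]]|Hno].
  - right. exists R. split; auto.
    destruct (in_warc (pstart R) (psteps R) h Hin) as [a' [b' Ha']].
    destruct (Hm R UR a' h b' Ha') as [Eh|[Q [UQ HQ]]]; [congruence|].
    destruct Hr as [Hun|[P [UP HP]]].
    + exfalso. apply (Hun Q UQ). eapply arcP_edge; eauto.
    + destruct (classic (P = Q)) as [<-|NPQ].
      * destruct (warc_unique _ _ _ _ _ _ _ (path_nodup_edges P (Hp P UP)) HP HQ) as [<- <-].
        exact Ha'.
      * exfalso. apply (Hd P Q UP UQ NPQ h); eapply arcP_edge; eauto.
  - left. intros R UR Hin. apply Hno. eauto.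
Qed.

Lemma inv_paths U D x : inv U D x -> forall P, U P -> is_path P.
Proof.
  intros (UD & PD & _ & _ & _ & Hst' & _) P UP.
  destruct (classic (P = D)) as [->|N]; auto. apply (Hst' P UP N).
Qed.

Lemma inv_starts U D x : inv U D x -> forall P, U P -> pstart P = s.
Proof.
  intros (UD & PD & SD & _ & _ & Hst' & _) P UP.
  destruct (classic (P = D)) as [->|N]; auto. apply (Hst' P UP N).
Qed.

Lemma step_not_s U D x g y W' : inv U D x -> rwalk U x ((g, y) :: W') ->
  endv x ((g, y) :: W') = t -> y <> s.
Proof.
  intros I Hr Ht Ey. subst y. rewrite endv_cons in Ht.
  destruct W' as [|[g' z] W'].
  - simpl in Ht. apply Hst; auto.
  - assert (R : resid U s z g') by (apply Hr; constructor; constructor).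
    destruct R as [J [_ R]].
    pose proof I as I'. destruct I' as (_ & _ & _ & _ & _ & _ & _ & Hcov & _).
    assert (Hd : deltav G s g').
    { exists s, z. destruct J as [J1 [J2 J3]]. repeat split; auto. }
    destruct (Hcov g' Hd) as [P [UP HinP]].
    destruct R as [Hun|[Q [UQ HQ]]].
    + apply (Hun P UP HinP).
    + eapply (arc_head_not_start Q); eauto.
      * eapply inv_paths; eauto.
      * symmetry. eapply inv_starts; eauto.
Qed.


Lemma rwalk_tail U x g y W' : rwalk U x ((g, y) :: W') -> rwalk U y W'.
Proof. intros H a h b Hw. apply H. constructor; auto. Qed.

Lemma rwalk_head U x g y W' : rwalk U x ((g, y) :: W') -> resid U x y g.
Proof. intros H. apply H. constructor. Qed.

Lemma avoid_g U x g y W' : rwalk U x ((g, y) :: W') -> NoDup (verts x ((g, y) :: W')) ->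
  forall a h b, warc y W' a h b -> h <> g.
Proof.
  intros Hr N a h b Hw Eh. subst h.
  destruct (rwalk_head _ _ _ _ _ Hr) as [J _].
  assert (J2 : joins g a b) by (apply (Hr a g b); constructor; auto).
  unfold verts in N. simpl in N. apply NoDup_cons_iff in N. destruct N as [Nx _].
  destruct (joins_same _ _ _ _ _ J J2) as [[E1 _]|[E1 _]].
  - apply Nx. rewrite E1. apply (warc_va _ _ _ _ _ Hw).
  - apply Nx. rewrite E1. right. apply (warc_vb _ _ _ _ _ Hw).
Qed.

Lemma in_fst_app_l (l m : list (E * V)) h : In h (map fst l) -> In h (map fst (l ++ m)).
Proof. intros H. rewrite map_app, in_app_iff. auto. Qed.

Lemma in_fst_app_r (l m : list (E * V)) h : In h (map fst m) -> In h (map fst (l ++ m)).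
Proof. intros H. rewrite map_app, in_app_iff. auto. Qed.

Lemma prefix_path x l1 l2 : walk_ok G x (l1 ++ l2) -> NoDup (verts x (l1 ++ l2)) ->
  walk_ok G x l1 /\ NoDup (verts x l1).
Proof.
  intros W N. apply walk_app in W. split; [tauto|].
  rewrite verts_app in N. eapply NoDup_app_remove_r; eauto.
Qed.

Lemma first_edge_kept D h z rest l1 l2 : psteps D = (h, z) :: rest -> psteps D = l1 ++ l2 ->
  l1 <> [] -> In h (map fst l1).
Proof.
  intros E1 E2 Hne. destruct l1 as [|[h1 z1] l1]; [congruence|].
  rewrite E1 in E2. simpl in E2. injection E2; intros; subst. left; auto.
Qed.

Lemma case_prefix U D x g y W' : inv U D x -> rwalk U x ((g, y) :: W') ->
  NoDup (verts x ((g, y) :: W')) -> y <> s -> In y (pverts D) ->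
  exists U' D', inv U' D' y /\ rwalk U' y W'.
Proof.
  intros I Hr N Ys Hy.
  pose proof I as I'.
  destruct I' as (UD & PD & SD & ED & Xs & Hstp & Hdis & Hcov & Hne).
  unfold pverts in Hy.
  destruct (prefix_at _ _ _ Hy) as [l1 [l2 [El Ey]]].
  set (D' := mkPath G s l1).
  set (U' := fun P => (U P /\ P <> D) \/ P = D').
  assert (PD' : is_path D').
  { destruct PD as [W ND]. change (NoDup (verts (pstart D) (psteps D))) in ND.
    rewrite El in W, ND. rewrite SD in W, ND.
    destruct (prefix_path _ _ _ W ND). split; auto. }
  assert (Sub : forall h, In h (pedges D') -> In h (pedges D)).
  { intros h Hh. unfold Defs.pedges in *. rewrite El. apply in_fst_app_l. exact Hh. }
  exists U', D'. split.
  - apply mk_inv.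
    + right; auto.
    + apply PD'.
    + reflexivity.
    + rewrite pend_endv. simpl. rewrite <- SD. exact Ey.
    + exact Ys.
    + intros P [[UP NPD]|E1] NP; [apply Hstp; auto|contradiction].
    + intros P Q [[UP NP]|EP] [[UQ NQ]|EQ] NPQ g0 H1 H2.
      * apply (Hdis P Q UP UQ NPQ g0 H1 H2).
      * subst Q. apply (Hdis P D UP UD NP g0 H1 (Sub g0 H2)).
      * subst P. apply (Hdis Q D UQ UD NQ g0 H2 (Sub g0 H1)).
      * congruence.
    + intros h Hh. destruct (Hcov h Hh) as [P [UP HP]].
      destruct (classic (P = D)) as [->|NP].
      * exists D'. split; [right; auto|].
        destruct (first_edge_delta s D h PD SD HP Hh) as [z [rest Er]].
        apply (first_edge_kept D h z rest l1 l2 Er El).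
        intros ->. simpl in Ey. apply Ys. rewrite <- Ey. rewrite <- SD. reflexivity.
      * exists P. split; [left; auto|auto].
    + intros P [[UP _]| ->]; [apply Hne; auto|].
      intros H. apply (Hne D UD). apply Sub; auto.
  - intros a h b Hw.
    apply (mono U U' g).
    + intros R [[UR _]| ->] a' h' b' Ha'.
      * right. exists R. auto.
      * right. exists D. split; auto. unfold arcP in *. rewrite El. apply warc_app. left.
        rewrite SD. exact Ha'.
    + apply Hdis.
    + eapply inv_paths; eauto.
    + eapply avoid_g; eauto.
    + eapply rwalk_tail; eauto.
Qed.

Lemma case_extend U D x g y W' : inv U D x -> rwalk U x ((g, y) :: W') ->
  NoDup (verts x ((g, y) :: W')) -> y <> s -> ~ In y (pverts D) ->
  (forall P, U P -> ~ In g (pedges P)) ->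
  exists U' D', inv U' D' y /\ rwalk U' y W'.
Proof.
  intros I Hr N Ys Hy Hun.
  pose proof I as I'.
  destruct I' as (UD & PD & SD & ED & Xs & Hstp & Hdis & Hcov & Hne).
  destruct (rwalk_head _ _ _ _ _ Hr) as [J [Ge _]].
  set (D' := mkPath G s (psteps D ++ [(g, y)])).
  set (U' := fun P => (U P /\ P <> D) \/ P = D').
  assert (PD' : is_path D').
  { destruct PD as [W ND]. change (NoDup (verts (pstart D) (psteps D))) in ND.
    rewrite SD in W, ND. split.
    - simpl. apply walk_app. split; auto. simpl. rewrite <- SD, <- pend_endv, ED. tauto.
    - change (NoDup (verts s (psteps D ++ [(g, y)]))). rewrite verts_app.
      apply NoDup_app; auto.
      + constructor; [auto|constructor].
      + intros a Ha [<-|[]]. apply Hy. unfold Defs.pverts. rewrite SD. exact Ha. }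
  assert (Sub : forall h, In h (pedges D') -> In h (pedges D) \/ h = g).
  { intros h Hh. unfold Defs.pedges in Hh. simpl in Hh. rewrite map_app, in_app_iff in Hh.
    simpl in Hh. destruct Hh as [Hh|[<-|[]]]; [left; exact Hh|right; reflexivity]. }
  exists U', D'. split.
  - apply mk_inv.
    + right; auto.
    + apply PD'.
    + reflexivity.
    + rewrite pend_endv. simpl. apply endv_snoc.
    + exact Ys.
    + intros P [[UP NPD]|E1] NP; [apply Hstp; auto|contradiction].
    + intros P Q [[UP NP]|EP] [[UQ NQ]|EQ] NPQ g0 H1 H2.
      * apply (Hdis P Q UP UQ NPQ g0 H1 H2).
      * subst Q. destruct (Sub g0 H2) as [H3| ->].
        -- apply (Hdis P D UP UD NP g0 H1 H3).
        -- apply (Hun P UP H1).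
      * subst P. destruct (Sub g0 H1) as [H3| ->].
        -- apply (Hdis Q D UQ UD NQ g0 H2 H3).
        -- apply (Hun Q UQ H2).
      * congruence.
    + intros h Hh. destruct (Hcov h Hh) as [P [UP HP]].
      destruct (classic (P = D)) as [->|NP].
      * exists D'. split; [right; auto|].
        unfold Defs.pedges. simpl. apply in_fst_app_l. exact HP.
      * exists P. split; [left; auto|auto].
    + intros P [[UP _]| ->]; [apply Hne; auto|].
      intros H. destruct (Sub e H) as [H3|H3]; [apply (Hne D UD H3)|congruence].
  - intros a h b Hw.
    apply (mono U U' g).
    + intros R [[UR _]| ->] a' h' b' Ha'.
      * right. exists R. auto.
      * unfold arcP in Ha'. simpl in Ha'. apply warc_app in Ha'. destruct Ha' as [Ha'|Ha'].
        -- right. exists D. split; auto. unfold arcP. rewrite SD. exact Ha'.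
        -- left. inversion Ha' as [|? ? ? ? ? ? ? Hr']; subst; auto. inversion Hr'.
    + apply Hdis.
    + eapply inv_paths; eauto.
    + eapply avoid_g; eauto.
    + eapply rwalk_tail; eauto.
Qed.

Lemma case_swap U D x g y W' : inv U D x -> rwalk U x ((g, y) :: W') ->
  NoDup (verts x ((g, y) :: W')) -> y <> s -> ~ In y (pverts D) ->
  forall P, U P -> arcP P y g x ->
  exists U' D', inv U' D' y /\ rwalk U' y W'.
Proof.
  intros I Hr N Ys Hy P UP HPa.
  pose proof I as I'.
  destruct I' as (UD & PD & SD & ED & Xs & Hstp & Hdis & Hcov & Hne).
  assert (NPD : P <> D).
  { intros ->. apply Hy. apply (warc_va _ _ _ _ _ HPa). }
  destruct (Hstp P UP NPD) as [PP [SP EP]].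
  pose proof PP as [WP NP]. change (NoDup (verts (pstart P) (psteps P))) in NP.
  pose proof (path_nodup_edges P PP) as NEP.
  unfold arcP in HPa. apply warc_split in HPa. destruct HPa as [l1 [l2 [El1 Ey]]].
  rewrite SP in Ey.
  assert (Xin : In x (pverts D)).
  { rewrite <- ED, pend_endv. apply endv_in. }
  destruct (last_in_set (fun w => In w (pverts D)) x l2 Xin) as [m1 [m2 [Em [Zin Hm2]]]].
  set (z := endv x m1) in *.
  pose proof Zin as Zin'. unfold Defs.pverts in Zin'. rewrite SD in Zin'.
  change (In z (verts s (psteps D))) in Zin'.
  destruct (prefix_at _ _ _ Zin') as [d1 [d2 [Ed Ez]]].
  set (LP := l1 ++ (g, x) :: m1).
  assert (ElP : psteps P = LP ++ m2).
  { rewrite El1, Em. unfold LP. rewrite <- app_assoc. reflexivity. }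
  assert (ELP : endv s LP = z).
  { unfold LP. rewrite endv_app, Ey, endv_cons. reflexivity. }
  rewrite SP in WP, NP.
  set (Pn := mkPath G s (d1 ++ m2)).
  set (D' := mkPath G s l1).
  set (U' := fun R => (U R /\ R <> D /\ R <> P) \/ R = Pn \/ R = D').
  pose proof PD as [WD ND]. change (NoDup (verts (pstart D) (psteps D))) in ND.
  rewrite SD in WD, ND.
  assert (PPn : is_path Pn).
  { split.
    - simpl. apply walk_app. split.
      + rewrite Ed in WD. apply walk_app in WD. tauto.
      + rewrite Ez. rewrite ElP in WP. apply walk_app in WP. rewrite ELP in WP. tauto.
    - change (NoDup (verts s (d1 ++ m2))). rewrite verts_app. apply NoDup_app.
      + rewrite Ed in ND. rewrite verts_app in ND. eapply NoDup_app_remove_r; eauto.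
      + rewrite ElP, verts_app in NP. eapply NoDup_app_remove_l; eauto.
      + intros w Hw1 Hw2. apply (Hm2 w Hw2). unfold Defs.pverts. rewrite SD.
        change (In w (verts s (psteps D))). rewrite Ed, verts_app, in_app_iff. auto. }
  assert (EPn : pend Pn = t).
  { rewrite pend_endv. simpl. rewrite endv_app, Ez. rewrite <- EP, pend_endv, SP, ElP.
    rewrite endv_app, ELP. reflexivity. }
  assert (PD' : is_path D').
  { rewrite El1 in WP, NP. destruct (prefix_path _ _ _ WP NP). split; auto. }
  assert (SubN : forall h, In h (pedges Pn) -> In h (pedges D) \/ In h (map fst m2)).
  { intros h Hh. unfold Defs.pedges in *. simpl in Hh. rewrite map_app, in_app_iff in Hh.
    destruct Hh as [Hh|Hh]; [left|right; auto]. rewrite Ed. apply in_fst_app_l; auto. }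
  assert (M2P : forall h, In h (map fst m2) -> In h (pedges P)).
  { intros h Hh. unfold Defs.pedges. rewrite ElP. apply in_fst_app_r; auto. }
  assert (SubD : forall h, In h (pedges D') -> In h (pedges P)).
  { intros h Hh. unfold Defs.pedges. rewrite El1. apply in_fst_app_l; auto. }
  assert (DisL : forall h, In h (pedges D') -> ~ In h (map fst m2)).
  { intros h H1 H2. unfold Defs.pedges in NEP. rewrite El1, Em in NEP.
    rewrite map_app in NEP. eapply (nodup_app_disj _ _ h NEP); [exact H1|].
    simpl. right. rewrite map_app, in_app_iff. auto. }
  assert (DP : forall h, In h (pedges D) -> ~ In h (pedges P)).
  { intros h H1 H2. apply (Hdis D P UD UP (not_eq_sym NPD) h H1 H2). }
  assert (Zs : z <> s).
  { intros Ez'. apply (verts_snd_not_start P z PP). 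
    - rewrite ElP, map_app, in_app_iff. left. rewrite <- ELP.
      unfold LP. rewrite endv_app, Ey, endv_cons, map_app, in_app_iff. right.
      simpl. pose proof (endv_in x m1) as Hx. unfold verts in Hx.
      exact Hx.
    - rewrite SP. exact Ez'. }
  exists U', D'. split.
  - apply mk_inv.
    + right; right; auto.
    + apply PD'.
    + reflexivity.
    + rewrite pend_endv. simpl. exact Ey.
    + exact Ys.
    + intros R [[UR [NRD NRP]]|[-> | ->]] NR.
      * apply Hstp; auto.
      * split; [exact PPn|split; [reflexivity|exact EPn]].
      * contradiction.
    + intros R Q HR HQ NRQ h H1 H2.
      destruct HR as [[UR [NRD NRP]]|[-> | ->]]; destruct HQ as [[UQ [NQD NQP]]|[-> | ->]].
      * apply (Hdis R Q UR UQ NRQ h H1 H2).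
      * destruct (SubN h H2) as [H3|H3].
        -- apply (Hdis R D UR UD NRD h H1 H3).
        -- apply (Hdis R P UR UP NRP h H1 (M2P h H3)).
      * apply (Hdis R P UR UP NRP h H1 (SubD h H2)).
      * destruct (SubN h H1) as [H3|H3].
        -- apply (Hdis Q D UQ UD NQD h H2 H3).
        -- apply (Hdis Q P UQ UP NQP h H2 (M2P h H3)).
      * congruence.
      * destruct (SubN h H1) as [H3|H3].
        -- apply (DP h H3 (SubD h H2)).
        -- apply (DisL h H2 H3).
      * apply (Hdis Q P UQ UP NQP h H2 (SubD h H1)).
      * destruct (SubN h H2) as [H3|H3].
        -- apply (DP h H3 (SubD h H1)).
        -- apply (DisL h H1 H3).
      * congruence.
    + intros h Hh. destruct (Hcov h Hh) as [R [UR HR]].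
      destruct (classic (R = D)) as [->|NRD]; [|destruct (classic (R = P)) as [->|NRP]].
      * exists Pn. split; [right; left; auto|].
        destruct (first_edge_delta s D h PD SD HR Hh) as [z0 [rest Er]].
        unfold Defs.pedges. simpl. apply in_fst_app_l.
        apply (first_edge_kept D h z0 rest d1 d2 Er Ed).
        intros ->. apply Zs. rewrite <- Ez. reflexivity.
      * exists D'. split; [right; right; auto|].
        destruct (first_edge_delta s P h PP SP HR Hh) as [z0 [rest Er]].
        apply (first_edge_kept P h z0 rest l1 ((g, x) :: l2) Er El1).
        intros ->. apply Ys. rewrite <- Ey. reflexivity.
      * exists R. split; [left; auto|auto].
    + intros R [[UR _]|[-> | ->]] H.
      * apply (Hne R UR H).
      * destruct (SubN e H) as [H3|H3]; [apply (Hne D UD H3)|apply (Hne P UP (M2P e H3))].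
      * apply (Hne P UP (SubD e H)).
  - intros a h b Hw.
    apply (mono U U' g).
    + intros R [[UR _]|[-> | ->]] a' h' b' Ha'.
      * right. exists R. auto.
      * unfold arcP in Ha'. simpl in Ha'. apply warc_app in Ha'. right.
        destruct Ha' as [Ha'|Ha'].
        -- exists D. split; auto. unfold arcP. rewrite SD, Ed. apply warc_app. left. exact Ha'.
        -- exists P. split; auto. unfold arcP. rewrite SP, ElP. apply warc_app. right.
           rewrite ELP, <- Ez. exact Ha'.
      * right. exists P. split; auto. unfold arcP. rewrite SP, El1. apply warc_app. left.
        exact Ha'.
    + apply Hdis.
    + eapply inv_paths; eauto.
    + eapply avoid_g; eauto.
    + eapply rwalk_tail; eauto.
Qed.

Lemma aug : forall n W U D x, length W <= n -> inv U D x -> rwalk U x W ->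
  NoDup (verts x W) -> endv x W = t ->
  exists T, links G s t T /\ ~ uses G T e.
Proof.
  induction n as [|n IH]; intros W U D x Hl I Hr N Ht;
  (destruct W as [|[g y] W']; [|simpl in Hl; try lia]).
  1,2: exists U; pose proof I as I';
    destruct I' as (UD & PD & SD & ED & Xs & Hstp & Hdis & Hcov & Hne);
    simpl in Ht; split;
    [split; [split; [|exact Hdis]|exact Hcov]
    |intros [P [UP HP]]; exact (Hne P UP HP)];
    intros P UP; destruct (classic (P = D)) as [->|NP];
    [split; [exact PD|split; [exact SD|rewrite ED; exact Ht]]|apply Hstp; auto].
  assert (Ys : y <> s) by (eapply step_not_s; eauto).
  assert (Hex : exists U' D', inv U' D' y /\ rwalk U' y W').
  { destruct (classic (In y (pverts D))) as [Hy|Hy].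
    - eapply case_prefix; eauto.
    - destruct (rwalk_head _ _ _ _ _ Hr) as [_ [_ [Hun|[P [UP HP]]]]].
      + eapply case_extend; eauto.
      + eapply case_swap; eauto. }
  destruct Hex as [U' [D' [I' Hr']]].
  apply (IH W' U' D' y); auto; [lia| |].
  - unfold verts in N. simpl in N. apply NoDup_cons_iff in N. apply N.
  - rewrite endv_cons in Ht. exact Ht.
Qed.

End Aug.

Section Main.
Variables s t : V.
Variable e : E.
Hypothesis Hst : s <> t.
Hypothesis Hforce : forall S, links G s t S -> uses G S e.
Hypothesis Hnd : ~ deltav G s e.
Variable C : E -> Prop.
Variable X : V -> Prop.
Hypothesis HCX : forall h, C h <-> delta G X h.
Hypothesis HXs : X s.
Variable S : path G -> Prop.
Hypothesis HS : ed_system G s t S.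
Hypothesis HSo : orthogonal G C S.
Hypothesis HCcut : forall P, stpath s t P -> exists h, In h (pedges P) /\ C h.
Hypothesis Hmin : forall C', EM_stcut G s t C' -> C' e -> cut_le G s t C C'.

Definition noC (l : list (E * V)) := forall h, In h (map fst l) -> ~ C h.
Definition inX g := forall w, inc g w -> X w.
Definition outX g := forall w, inc g w -> ~ X w.

Lemma inX_outX g : inX g -> outX g -> False.
Proof.
  intros H1 H2. destruct (inc_two G g) as [u [v [_ Hw]]].
  assert (Hu : inc g u) by (apply Hw; auto). exact (H2 u Hu (H1 u Hu)).
Qed.

Lemma C_not_inX g : C g -> inX g -> False.
Proof.
  intros Hc H. apply HCX in Hc. destruct Hc as [u [v [_ [Hv [_ Nv]]]]]. exact (Nv (H v Hv)).
Qed.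

Lemma C_not_outX g : C g -> outX g -> False.
Proof.
  intros Hc H. apply HCX in Hc. destruct Hc as [u [v [Hu [_ [Xu _]]]]]. exact (H u Hu Xu).
Qed.

Lemma joins_inX g a b : joins g a b -> X a -> X b -> inX g.
Proof. intros J Xa Xb w Hw. destruct (ends_eq g a b w J Hw) as [->| ->]; auto. Qed.

Lemma joins_outX g a b : joins g a b -> ~ X a -> ~ X b -> outX g.
Proof. intros J Xa Xb w Hw. destruct (ends_eq g a b w J Hw) as [->| ->]; auto. Qed.

Lemma cross_C f a b : joins f a b -> X a -> C f -> ~ X b.
Proof. intros J Xa Cf Xb. apply (C_not_inX f Cf). eapply joins_inX; eauto. Qed.

Lemma side_in x l : walk_ok G x l -> X x -> noC l -> forall w, In w (verts x l) -> X w.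
Proof.
  intros W Xx N. apply prop_fwd; auto.
  intros a h b Hab Xa. apply NNPP. intros Nb. apply (N h (warc_edge _ _ _ _ _ Hab)).
  apply HCX. pose proof (warc_joins _ _ _ _ _ W Hab) as [J1 [J2 _]].
  exists a, b. auto.
Qed.

Lemma side_out x l : walk_ok G x l -> ~ X x -> noC l -> forall w, In w (verts x l) -> ~ X w.
Proof.
  intros W Xx N. apply (prop_fwd (fun w => ~ X w)); auto.
  intros a h b Hab Xa Xb. apply (N h (warc_edge _ _ _ _ _ Hab)).
  apply HCX. pose proof (warc_joins _ _ _ _ _ W Hab) as [J1 [J2 _]].
  exists b, a. auto.
Qed.

Lemma arc_inX x l a g b : walk_ok G x l -> (forall w, In w (verts x l) -> X w) ->
  warc x l a g b -> inX g.
Proof.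
  intros W H Hw. apply (joins_inX g a b).
  - eapply warc_joins; eauto.
  - apply H. eapply warc_va; eauto.
  - apply H. eapply warc_vb'; eauto.
Qed.

Lemma arc_outX x l a g b : walk_ok G x l -> (forall w, In w (verts x l) -> ~ X w) ->
  warc x l a g b -> outX g.
Proof.
  intros W H Hw. apply (joins_outX g a b).
  - eapply warc_joins; eauto.
  - apply H. eapply warc_va; eauto.
  - apply H. eapply warc_vb'; eauto.
Qed.

Lemma S_path Q : S Q -> stpath s t Q.
Proof. intros HQ. apply (proj1 HS Q HQ). Qed.

Lemma Cuniq Q a b : S Q -> In a (pedges Q) -> C a -> In b (pedges Q) -> C b -> a = b.
Proof.
  intros HQ Ha Ca Hb Cb. destruct (proj1 HSo Q HQ) as [e0 [_ [_ Hu]]].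
  rewrite (Hu a Ha Ca), (Hu b Hb Cb). reflexivity.
Qed.

Lemma S_disj Q Q' g : S Q -> S Q' -> In g (pedges Q) -> In g (pedges Q') -> Q = Q'.
Proof.
  intros H1 H2 G1 G2. apply NNPP. intros N. apply (proj2 HS Q Q' H1 H2 N g G1 G2).
Qed.

Lemma S_split Q f : S Q -> In f (pedges Q) -> C f ->
  exists m1 y m2, psteps Q = m1 ++ (f, y) :: m2 /\ noC m1 /\ noC m2 /\
    X (endv s m1) /\ ~ X y /\ (forall w, In w (verts y m2) -> ~ X w) /\
    walk_ok G y m2 /\ NoDup (verts y m2) /\ endv y m2 = t.
Proof.
  intros HQ Hf Cf.
  destruct (S_path Q HQ) as [[WQ NQ] [SQ EQ]].
  change (NoDup (verts (pstart Q) (psteps Q))) in NQ.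
  pose proof (path_nodup_edges Q (proj1 (S_path Q HQ))) as NE.
  destruct (in_warc (pstart Q) (psteps Q) f Hf) as [a [y Ha]].
  pose proof (warc_joins _ _ _ _ _ WQ Ha) as J.
  apply warc_split in Ha. destruct Ha as [m1 [m2 [Eq Ea]]].
  rewrite SQ in Ea, WQ, NQ.
  unfold Defs.pedges in NE. rewrite Eq, map_app in NE.
  assert (N1 : noC m1).
  { intros h Hh Ch. assert (h = f).
    { apply (Cuniq Q h f HQ); auto. unfold Defs.pedges. rewrite Eq. apply in_fst_app_l; auto. }
    subst h. apply (nodup_app_disj _ _ f NE Hh). left; auto. }
  assert (N2 : noC m2).
  { intros h Hh Ch. assert (h = f).
    { apply (Cuniq Q h f HQ); auto. unfold Defs.pedges. rewrite Eq. apply in_fst_app_r.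
      right; auto. }
    subst h. simpl in NE. apply NoDup_remove_2 in NE. apply NE.
    apply in_app_iff; auto. }
  rewrite Eq in WQ. apply walk_app in WQ. destruct WQ as [W1 [J' W2]].
  rewrite Ea in J'.
  assert (Xa : X a). { rewrite <- Ea. apply (side_in s m1 W1 HXs N1). apply endv_in. }
  assert (Ny : ~ X y) by (eapply cross_C; eauto).
  exists m1, y, m2. repeat split; auto.
  - rewrite Ea; auto.
  - apply side_out; auto.
  - rewrite Eq, verts_app in NQ. apply NoDup_app_remove_l in NQ. exact NQ.
  - rewrite <- EQ, pend_endv, SQ, Eq, endv_app, endv_cons. reflexivity.
Qed.


Lemma nodup_not_before (m1 m2 : list (E * V)) f y :
  NoDup (map fst (m1 ++ (f, y) :: m2)) -> ~ In f (map fst m1).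
Proof.
  intros N H. rewrite map_app in N. apply (nodup_app_disj _ _ f N H). left; auto.
Qed.

Section Glue.
Variable L : path G -> Prop.
Hypothesis HL : links G s t L.

Definition glue_data P Q l1 f y l2 m1 m2 P' :=
  L P /\ S Q /\ psteps P = l1 ++ (f, y) :: l2 /\ C f /\ noC l1 /\
  psteps Q = m1 ++ (f, y) :: m2 /\ P' = mkPath G s (l1 ++ (f, y) :: m2).

Definition Lp P' := exists P Q l1 f y l2 m1 m2, glue_data P Q l1 f y l2 m1 m2 P'.

Lemma L_path P : L P -> stpath s t P.
Proof. intros H. apply (proj1 (proj1 HL) P H). Qed.

Lemma glue_facts P Q l1 f y l2 m1 m2 P' : glue_data P Q l1 f y l2 m1 m2 P' ->
  (forall w, In w (verts s l1) -> X w) /\ walk_ok G s l1 /\ joins f (endv s l1) y /\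
  ~ X y /\ noC m2 /\ (forall w, In w (verts y m2) -> ~ X w) /\ walk_ok G y m2 /\
  NoDup (verts s l1) /\ NoDup (verts y m2) /\ endv y m2 = t /\
  In f (pedges P) /\ In f (pedges Q) /\ In f (pedges P').
Proof.
  intros (LP & SQ & EP & Cf & N1 & EQ & ->).
  destruct (L_path P LP) as [[WP NP] [SP _]].
  change (NoDup (verts (pstart P) (psteps P))) in NP.
  rewrite SP, EP in WP, NP.
  apply walk_app in WP. destruct WP as [W1 [J _]].
  rewrite verts_app in NP. apply NoDup_app_remove_r in NP.
  assert (FQ : In f (pedges Q)).
  { unfold Defs.pedges. rewrite EQ. apply in_fst_app_r. left; auto. }
  destruct (S_split Q f SQ FQ Cf) as [m1' [y' [m2' [EQ' [_ [Nm2 [_ [Ny [Hout [W2 [N2 Et]]]]]]]]]]].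
  assert (Hm : m1 = m1' /\ f = f /\ y = y' /\ m2 = m2').
  { apply (first_split_unique (fun h => h = f) m1 f y m2 m1' f y' m2'); auto.
    - congruence.
    - pose proof (path_nodup_edges Q (proj1 (S_path Q SQ))) as NE.
      unfold Defs.pedges in NE. rewrite EQ in NE. intros h Hh ->.
      exact (nodup_not_before _ _ _ _ NE Hh).
    - pose proof (path_nodup_edges Q (proj1 (S_path Q SQ))) as NE.
      unfold Defs.pedges in NE. rewrite EQ' in NE. intros h Hh ->.
      exact (nodup_not_before _ _ _ _ NE Hh). }
  destruct Hm as [_ [_ [<- <-]]].
  repeat split; auto.
  all: first [ solve [apply side_in; auto]
             | solve [unfold Defs.pedges; rewrite EP; apply in_fst_app_r; left; auto]
             | solve [unfold Defs.pedges; simpl; apply in_fst_app_r; left; auto]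
             | solve [apply J] ].
Qed.

Lemma glue_path P Q l1 f y l2 m1 m2 P' : glue_data P Q l1 f y l2 m1 m2 P' -> stpath s t P'.
Proof.
  intros Hg. pose proof (glue_facts _ _ _ _ _ _ _ _ _ Hg) as
    (Hin & W1 & J & Ny & Nm2 & Hout & W2 & N1 & N2 & Et & _).
  destruct Hg as (_ & _ & _ & _ & _ & _ & ->).
  split; [split|split].
  - simpl. apply walk_app. split; auto. simpl. auto.
  - change (NoDup (verts s (l1 ++ (f, y) :: m2))). rewrite verts_app.
    apply NoDup_app; auto.
    intros w H1 H2. apply (Hout w H2). apply Hin; auto.
  - reflexivity.
  - rewrite pend_endv. simpl. rewrite endv_app, endv_cons. exact Et.
Qed.

Lemma glue_class P Q l1 f y l2 m1 m2 P' g : glue_data P Q l1 f y l2 m1 m2 P' ->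
  In g (pedges P') ->
  (In g (pedges P) /\ inX g) \/ (g = f /\ C f /\ In f (pedges P) /\ In f (pedges Q)) \/
  (In g (pedges Q) /\ outX g).
Proof.
  intros Hg Hin. pose proof (glue_facts _ _ _ _ _ _ _ _ _ Hg) as
    (HinX & W1 & J & Ny & Nm2 & Hout & W2 & N1 & N2 & Et & FP & FQ & _).
  destruct Hg as (LP & SQ & EP & Cf & _ & EQ & ->).
  unfold Defs.pedges in Hin. simpl in Hin. rewrite map_app, in_app_iff in Hin.
  destruct Hin as [Hin|[<-|Hin]].
  - left. split.
    + unfold Defs.pedges. rewrite EP. apply in_fst_app_l; auto.
    + destruct (in_warc s l1 g Hin) as [a [b Hab]]. exact (arc_inX s l1 a g b W1 HinX Hab).
  - right; left. auto.
  - right; right. split.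
    + unfold Defs.pedges. rewrite EQ. apply in_fst_app_r. right; auto.
    + destruct (in_warc y m2 g Hin) as [a [b Hab]]. exact (arc_outX y m2 a g b W2 Hout Hab).
Qed.

Lemma glue_det P Q l1 f y l2 m1 m2 P1 Q' l1' f' y' l2' m1' m2' P2 :
  glue_data P Q l1 f y l2 m1 m2 P1 -> glue_data P Q' l1' f' y' l2' m1' m2' P2 -> P1 = P2.
Proof.
  intros H1 H2.
  pose proof (glue_facts _ _ _ _ _ _ _ _ _ H1) as (_ & _ & _ & _ & _ & _ & _ & _ & _ & _ & _ & FQ & _).
  pose proof (glue_facts _ _ _ _ _ _ _ _ _ H2) as (_ & _ & _ & _ & _ & _ & _ & _ & _ & _ & _ & FQ' & _).
  destruct H1 as (LP & SQ & EP & Cf & N1 & EQ & ->).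
  destruct H2 as (_ & SQ' & EP' & Cf' & N1' & EQ' & ->).
  destruct (first_split_unique C l1 f y l2 l1' f' y' l2') as [<- [<- [<- <-]]]; auto; [congruence|].
  assert (Q = Q') by (eapply S_disj; eauto). subst Q'.
  pose proof (path_nodup_edges Q (proj1 (S_path Q SQ))) as NE.
  destruct (first_split_unique (fun h => h = f) m1 f y m2 m1' f y m2') as [_ [_ [_ <-]]]; auto.
  - congruence.
  - unfold Defs.pedges in NE. rewrite EQ in NE. intros h Hh ->.
    exact (nodup_not_before _ _ _ _ NE Hh).
  - unfold Defs.pedges in NE. rewrite EQ' in NE. intros h Hh ->.
    exact (nodup_not_before _ _ _ _ NE Hh).
Qed.

Lemma glue_exists P : L P -> exists Q l1 f y l2 m1 m2 P', glue_data P Q l1 f y l2 m1 m2 P'.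
Proof.
  intros LP. destruct (L_path P LP) as [[WP NP] [SP EP]].
  destruct (HCcut P (L_path P LP)) as [h [Hh Ch]].
  destruct (first_split C (psteps P)) as [l1 [f [y [l2 [El [Cf N1]]]]]]; [exists h; auto|].
  assert (FP : In f (pedges P)).
  { unfold Defs.pedges. rewrite El. apply in_fst_app_r. left; auto. }
  destruct (proj2 HSo f Cf) as [Q [SQ FQ]].
  destruct (S_split Q f SQ FQ Cf) as [m1 [y' [m2 [EQ [_ [_ [_ [Ny' _]]]]]]]].
  assert (Ey : y = y').
  { rewrite SP in WP. rewrite El in WP. apply walk_app in WP. destruct WP as [W1 [J _]].
    assert (Xa : X (endv s l1)) by (apply (side_in s l1 W1 HXs N1); apply endv_in).
    destruct (S_path Q SQ) as [[WQ _] [SQ' _]]. rewrite SQ', EQ in WQ.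
    apply walk_app in WQ. destruct WQ as [_ [J' _]].
    destruct (joins_same _ _ _ _ _ J J') as [[_ E2]|[E1 _]]; auto.
    exfalso. apply Ny'. rewrite <- E1. exact Xa. }
  subst y'.
  exists Q, l1, f, y, l2, m1, m2, (mkPath G s (l1 ++ (f, y) :: m2)).
  repeat split; auto.
Qed.

Lemma Lp_links : links G s t Lp.
Proof.
  split; [split|].
  - intros P' (P & Q & l1 & f & y & l2 & m1 & m2 & Hg). eapply glue_path; eauto.
  - intros P1 P2 (P & Q & l1 & f & y & l2 & m1 & m2 & H1)
      (P' & Q' & l1' & f' & y' & l2' & m1' & m2' & H2) N g G1 G2.
    assert (NPP : P <> P').
    { intros <-. apply N. eapply glue_det; eauto. }
    pose proof H1 as (LP & SQ & _ & Cf & _). pose proof H2 as (LP' & SQ' & _ & Cf' & _).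
    assert (DL : forall g, In g (pedges P) -> In g (pedges P') -> False).
    { intros g0 A B. apply (proj2 (proj1 HL) P P' LP LP' NPP g0 A B). }
    assert (DQ : forall g, In g (pedges Q) -> In g (pedges Q') -> False).
    { intros g0 A B. assert (Q = Q') by (eapply S_disj; eauto). subst Q'.
      pose proof (glue_facts _ _ _ _ _ _ _ _ _ H1) as (_ & _ & _ & _ & _ & _ & _ & _ & _ & _ & FP & FQ & _).
      pose proof (glue_facts _ _ _ _ _ _ _ _ _ H2) as (_ & _ & _ & _ & _ & _ & _ & _ & _ & _ & FP' & FQ' & _).
      assert (f = f') by (eapply Cuniq; eauto). subst f'. eauto. }
    destruct (glue_class _ _ _ _ _ _ _ _ _ g H1 G1) as [[A1 B1]|[[E1 [C1 [A1 B1]]]|[A1 B1]]];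
    destruct (glue_class _ _ _ _ _ _ _ _ _ g H2 G2) as [[A2 B2]|[[E2 [C2 [A2 B2]]]|[A2 B2]]];
    subst.
    all: first [ solve [eauto] | solve [eapply inX_outX; eauto]
               | solve [eapply C_not_inX; eauto] | solve [eapply C_not_outX; eauto] ].
  - intros h Hh. destruct (proj2 HL h Hh) as [P [LP HP]].
    destruct (glue_exists P LP) as (Q & l1 & f & y & l2 & m1 & m2 & P' & Hg).
    exists P'. split; [exists P, Q, l1, f, y, l2, m1, m2; exact Hg|].
    destruct (L_path P LP) as [PP [SP _]].
    destruct (first_edge_delta s P h PP SP HP Hh) as [z [rest Er]].
    pose proof Hg as (_ & _ & EP & _ & _ & _ & ->).
    unfold Defs.pedges. simpl. rewrite Er in EP.
    destruct l1 as [|[h1 z1] l1]; simpl in EP; injection EP; intros; subst; simpl; auto.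
Qed.


Lemma delta_both_in (Y : V -> Prop) h a b : joins h a b -> Y a -> Y b -> ~ delta G Y h.
Proof.
  intros J Ya Yb [u [v [Hu [Hv [Yu Nv]]]]].
  destruct (ends_eq h a b v J Hv) as [-> | ->]; auto.
Qed.

Lemma delta_both_out (Y : V -> Prop) h a b : joins h a b -> ~ Y a -> ~ Y b -> ~ delta G Y h.
Proof.
  intros J Ya Yb [u [v [Hu [Hv [Yu Nv]]]]].
  destruct (ends_eq h a b u J Hu) as [-> | ->]; auto.
Qed.

Section Cl.
Variable P0 : path G.
Variables k1 k2 : list (E * V).
Variable v : V.
Hypothesis HP0 : Lp P0.
Hypothesis EP0 : psteps P0 = k1 ++ (e, v) :: k2.

Definition u := endv s k1.
Definition D0 := mkPath G s k1.
Definition U0 := fun P => (Lp P /\ P <> P0) \/ P = D0.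
Definition R0 b := exists W, rwalk e U0 u W /\ NoDup (verts u W) /\ endv u W = b.

Lemma P0_path : stpath s t P0.
Proof. apply (proj1 (proj1 Lp_links)). exact HP0. Qed.

Lemma P0_start : pstart P0 = s.
Proof. apply P0_path. Qed.

Lemma P0_nodup : NoDup (map fst k1 ++ e :: map fst k2).
Proof.
  pose proof (path_nodup_edges P0 (proj1 P0_path)) as N. unfold Defs.pedges in N.
  rewrite EP0, map_app in N. exact N.
Qed.

Lemma e_not_k1 : ~ In e (map fst k1).
Proof. intros H. apply (nodup_app_disj _ _ e P0_nodup H). left; auto. Qed.

Lemma e_not_k2 : ~ In e (map fst k2).
Proof.
  intros H. pose proof P0_nodup as N. apply NoDup_remove_2 in N. apply N.
  apply in_app_iff; auto.
Qed.

Lemma k12_disj h : In h (map fst k1) -> ~ In h (map fst k2).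
Proof. intros H1 H2. apply (nodup_app_disj _ _ h P0_nodup H1). right; auto. Qed.

Lemma P0_walk : walk_ok G s k1 /\ joins e u v /\ walk_ok G v k2.
Proof.
  destruct P0_path as [[W _] _]. rewrite P0_start, EP0 in W.
  apply walk_app in W. simpl in W. unfold u. tauto.
Qed.

Lemma P0_nodupv : NoDup (verts s k1).
Proof.
  destruct P0_path as [[_ N] _]. change (NoDup (verts (pstart P0) (psteps P0))) in N.
  rewrite P0_start, EP0, verts_app in N. eapply NoDup_app_remove_r; eauto.
Qed.

Lemma P0_end : endv v k2 = t.
Proof.
  destruct P0_path as [_ [_ E1]]. rewrite pend_endv, P0_start, EP0, endv_app, endv_cons in E1.
  exact E1.
Qed.

Lemma u_not_s : u <> s.
Proof.
  intros Eu. apply Hnd. destruct P0_walk as [_ [J _]].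
  exists u, v. destruct J as [J1 [J2 J3]]. repeat split; auto.
  intros Ev. apply J3. congruence.
Qed.

Lemma in_P0_k1 h : In h (map fst k1) -> In h (pedges P0).
Proof. intros H. unfold Defs.pedges. rewrite EP0. apply in_fst_app_l; auto. Qed.

Lemma in_P0_k2 h : In h (map fst k2) -> In h (pedges P0).
Proof. intros H. unfold Defs.pedges. rewrite EP0. apply in_fst_app_r. right; auto. Qed.

Lemma Lp_disj P Q h : Lp P -> Lp Q -> P <> Q -> In h (pedges P) -> In h (pedges Q) -> False.
Proof. intros H1 H2 N A B. apply (proj2 (proj1 Lp_links) P Q H1 H2 N h A B). Qed.

Lemma k2_unused h : In h (map fst k2) -> forall R, U0 R -> ~ In h (pedges R).
Proof.
  intros H R [[LR NR]| ->] HR.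
  - apply (Lp_disj R P0 h LR HP0 NR HR (in_P0_k2 h H)).
  - apply (k12_disj h HR H).
Qed.

Lemma inv0 : inv s t e U0 D0 u.
Proof.
  apply mk_inv.
  - right; auto.
  - split; [apply P0_walk|apply P0_nodupv].
  - reflexivity.
  - rewrite pend_endv. reflexivity.
  - apply u_not_s.
  - intros P [[LP _]| ->] N; [apply (proj1 (proj1 Lp_links)); auto|contradiction].
  - intros P Q [[LP NP]| ->] [[LQ NQ]| ->] N h H1 H2.
    + apply (Lp_disj P Q h LP LQ N H1 H2).
    + apply (Lp_disj P P0 h LP HP0 NP H1 (in_P0_k1 h H2)).
    + apply (Lp_disj Q P0 h LQ HP0 NQ H2 (in_P0_k1 h H1)).
    + congruence.
  - intros h Hh. destruct (proj2 Lp_links h Hh) as [P [LP HP]].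
    destruct (classic (P = P0)) as [->|N].
    + exists D0. split; [right; auto|].
      destruct (first_edge_delta s P0 h (proj1 P0_path) P0_start HP Hh) as [z [rest Er]].
      apply (first_edge_kept P0 h z rest k1 ((e, v) :: k2) Er EP0).
      intros Ek. apply u_not_s. unfold u. rewrite Ek. reflexivity.
    + exists P. split; [left; auto|auto].
  - intros P [[LP NP]| ->] H.
    + apply (Lp_disj P P0 e LP HP0 NP H). unfold Defs.pedges. rewrite EP0.
      apply in_fst_app_r. left; auto.
    + apply e_not_k1. exact H.
Qed.

Lemma R0_closed a b h : R0 a -> resid e U0 a b h -> R0 b.
Proof.
  intros [W [Hr [N Ea]]] Hres.
  destruct (classic (In b (verts u W))) as [Hb|Hb].
  - destruct (prefix_at _ _ _ Hb) as [W1 [W2 [-> Eb]]].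
    exists W1. split; [|split; auto].
    + intros a' h' b' Hw. apply Hr. apply warc_app. left; auto.
    + rewrite verts_app in N. eapply NoDup_app_remove_r; eauto.
  - exists (W ++ [(h, b)]). split; [|split].
    + intros a' h' b' Hw. apply warc_app in Hw. destruct Hw as [Hw|Hw]; [apply Hr; auto|].
      rewrite Ea in Hw. inversion Hw as [|? ? ? ? ? ? ? Hw']; subst; [auto|inversion Hw'].
    + rewrite verts_app. apply NoDup_app; auto.
      * constructor; [auto|constructor].
      * intros w H1 [<-|[]]. contradiction.
    + apply endv_snoc.
Qed.

Lemma R0_u : R0 u.
Proof.
  exists []. split; [intros a h b H; inversion H|split; [constructor; [auto|constructor]|reflexivity]].
Qed.

Lemma not_R0_t : ~ R0 t.
Proof.
  intros [W [Hr [N Et]]].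
  destruct (aug s t e Hst (length W) W U0 D0 u (le_n _) inv0 Hr N Et) as [T [HT NT]].
  apply NT. apply Hforce. exact HT.
Qed.

Lemma not_R0_v : ~ R0 v.
Proof.
  intros Hv. apply not_R0_t. rewrite <- P0_end.
  apply (prop_fwd R0 v k2); [|exact Hv|apply endv_in].
  intros a h b Hab Ra. apply (R0_closed a b h Ra).
  split; [eapply warc_joins; eauto; apply P0_walk|split].
  - intros ->. apply e_not_k2. eapply warc_edge; eauto.
  - left. apply k2_unused. eapply warc_edge; eauto.
Qed.

Lemma R0_s : R0 s.
Proof.
  apply (prop_bwd R0 s k1); [|exact R0_u|left; reflexivity].
  intros a h b Hab Rb. apply (R0_closed b a h Rb).
  split; [apply joins_sym; eapply warc_joins; eauto; apply P0_walk|split].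
  - intros ->. apply e_not_k1. eapply warc_edge; eauto.
  - right. exists D0. split; [right; auto|exact Hab].
Qed.

Lemma R0_back P a h b : Lp P -> arcP P a h b -> R0 b -> R0 a.
Proof.
  intros LP Hab Rb.
  assert (PP : stpath s t P) by (apply (proj1 (proj1 Lp_links)); auto).
  assert (J : joins h a b) by (eapply warc_joins; eauto; apply PP).
  destruct (classic (P = P0)) as [->|N].
  - unfold arcP in Hab. rewrite P0_start, EP0 in Hab. apply warc_app in Hab.
    destruct Hab as [Hab|Hab].
    + apply (R0_closed b a h Rb). split; [apply joins_sym; auto|split].
      * intros ->. apply e_not_k1. eapply warc_edge; eauto.
      * right. exists D0. split; [right; auto|exact Hab].
    + destruct (warc_cons_inv _ _ _ _ _ _ _ Hab) as [[_ [_ Eb]]|Hab'].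
      * exfalso. apply not_R0_v. rewrite <- Eb. exact Rb.
      * apply (R0_closed b a h Rb). split; [apply joins_sym; auto|split].
        -- intros ->. apply e_not_k2. eapply warc_edge; eauto.
        -- left. apply k2_unused. eapply warc_edge; eauto.
  - apply (R0_closed b a h Rb). split; [apply joins_sym; auto|split].
    + intros ->. apply (Lp_disj P P0 e LP HP0 N (arcP_edge _ _ _ _ Hab)).
      unfold Defs.pedges. rewrite EP0. apply in_fst_app_r. left; auto.
    + right. exists P. split; [left; auto|exact Hab].
Qed.

Lemma Dcut_used d : delta G R0 d -> exists P, Lp P /\ In d (pedges P).
Proof.
  intros Hd.
  destruct (classic (d = e)) as [->|Nde].
  - exists P0. split; auto. unfold Defs.pedges. rewrite EP0. apply in_fst_app_r. left; auto.
  - destruct (classic (exists R, U0 R /\ In d (pedges R))) as [[R [[[LR _]| ->] HR]]|Hno].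
    + exists R; auto.
    + exists P0. split; auto. apply in_P0_k1. exact HR.
    + exfalso. destruct Hd as [a [b [Ha [Hb [Ra Nb]]]]]. apply Nb.
      apply (R0_closed a b d Ra). split; [|split; auto].
      * split; [auto|split; auto]. intros ->. contradiction.
      * left. intros R UR HR. apply Hno. exists R; auto.
Qed.

Lemma EM_D : EM_stcut G s t (delta G R0).
Proof.
  split; [split|].
  - exists R0. tauto.
  - intros P [[WP NP] [SP EP]].
    destruct (crossing R0 (pstart P) (psteps P)) as [a [h [b [Hab [Ra Nb]]]]].
    + rewrite SP. exact R0_s.
    + rewrite <- pend_endv, EP. exact not_R0_t.
    + exists h. split; [eapply warc_edge; eauto|].
      pose proof (warc_joins _ _ _ _ _ WP Hab) as [J1 [J2 _]]. exists a, b. auto.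
  - exists Lp. split; [apply Lp_links|split].
    + intros P LP.
      assert (PP : stpath s t P) by (apply (proj1 (proj1 Lp_links)); auto).
      destruct PP as [[WP NP] [SP EP]].
      destruct (crossing R0 (pstart P) (psteps P)) as [a [h [b [Hab [Ra Nb]]]]].
      * rewrite SP. exact R0_s.
      * rewrite <- pend_endv, EP. exact not_R0_t.
      * exists h. split; [eapply warc_edge; eauto|split].
        -- pose proof (warc_joins _ _ _ _ _ WP Hab) as [J1 [J2 _]]. exists a, b. auto.
        -- intros h' Hh' Dh'.
           pose proof Hab as Hs. apply warc_split in Hs. destruct Hs as [p1 [p2 [Ep Ea]]].
           assert (Hin : forall w, In w (verts (pstart P) p1) -> R0 w).
           { apply prop_bwd; [|rewrite Ea; exact Ra].
             intros a' h1 b' H1. apply (R0_back P a' h1 b' LP). unfold arcP. rewrite Ep.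
             apply warc_app. left; auto. }
           assert (Hout : forall w, In w (verts b p2) -> ~ R0 w).
           { apply (prop_fwd (fun w => ~ R0 w)); [|exact Nb].
             intros a' h1 b' H1 Na' Rb'. apply Na'. apply (R0_back P a' h1 b' LP); auto.
             unfold arcP. rewrite Ep. apply warc_app. right. rewrite Ea.
             constructor. exact H1. }
           rewrite Ep in WP. apply walk_app in WP. destruct WP as [W1 [_ W2]].
           unfold Defs.pedges in Hh'. rewrite Ep, map_app, in_app_iff in Hh'.
           destruct Hh' as [H1|[<-|H1]]; [exfalso|reflexivity|exfalso].
           ++ destruct (in_warc (pstart P) p1 _ H1) as [a' [b' H2]].
              apply (delta_both_in R0 h' a' b'); auto.
              ** exact (warc_joins _ _ _ _ _ W1 H2).
              ** apply Hin. eapply warc_va; eauto.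
              ** apply Hin. eapply warc_vb'; eauto.
           ++ destruct (in_warc b p2 _ H1) as [a' [b' H2]].
              apply (delta_both_out R0 h' a' b'); auto.
              ** exact (warc_joins _ _ _ _ _ W2 H2).
              ** apply Hout. eapply warc_va; eauto.
              ** apply Hout. eapply warc_vb'; eauto.
    + intros d Hd. destruct (Dcut_used d Hd) as [P [LP HP]]. exists P; auto.
Qed.

Lemma D_e : delta G R0 e.
Proof.
  destruct P0_walk as [_ [[J1 [J2 _]] _]]. exists u, v. repeat split; auto.
  - exact R0_u.
  - exact not_R0_v.
Qed.

End Cl.

Lemma split_cmp {A : Type} (l1 l2 m1 m2 : list A) x y :
  l1 ++ x :: l2 = m1 ++ y :: m2 -> length l1 <= length m1 ->
  (x = y /\ l2 = m2) \/ exists k, m1 = l1 ++ x :: k /\ l2 = k ++ y :: m2.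
Proof.
  revert m1; induction l1 as [|a l1 IH]; intros m1 Heq Hl; destruct m1 as [|b m1];
  simpl in *; injection Heq; intros; subst.
  - left; auto.
  - right. exists m1. auto.
  - lia.
  - destruct (IH m1) as [Hq|[k [-> ->]]]; auto; [lia|]. right. exists k. auto.
Qed.

Lemma is_first_split (Cp : E -> Prop) P l1 f y l2 :
  psteps P = l1 ++ (f, y) :: l2 -> Cp f -> (forall h, In h (map fst l1) -> ~ Cp h) ->
  is_first G Cp P (length l1).
Proof.
  intros EP Cf N. exists f. unfold Defs.pedges. rewrite EP, map_app. split; [|split; auto].
  - rewrite nth_error_app2; rewrite length_map; [|lia]. replace (length l1 - length l1) with 0 by lia. reflexivity.
  - intros j e' Hj Hn. rewrite nth_error_app1 in Hn; [|rewrite length_map; lia].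
    apply N. eapply nth_error_In; eauto.
Qed.

Definition firstC P c := exists l1 y l2, psteps P = l1 ++ (c, y) :: l2 /\ C c /\ noC l1.

Lemma cover_first c : C c -> exists P, L P /\ firstC P c.
Proof.
  intros Cc.
  destruct (Hforce Lp Lp_links) as [P0 [HP0 He]].
  assert (SP0 : pstart P0 = s) by (apply (proj1 (proj1 Lp_links)); auto).
  destruct (in_warc (pstart P0) (psteps P0) e He) as [u0 [v Hw]].
  apply warc_split in Hw. destruct Hw as [k1 [k2 [EP0 _]]].
  pose proof (EM_D P0 k1 k2 v HP0 EP0) as HEM.
  pose proof (D_e P0 k1 k2 v HP0 EP0) as HDe.
  set (D := delta G (R0 P0 k1)) in *.
  pose proof (Hmin D HEM HDe) as Hle.
  destruct (proj2 HSo c Cc) as [Q [SQ HcQ]].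
  destruct (S_split Q c SQ HcQ Cc) as [m1 [y [m2 [EQ [N1 [_ [Xa [Ny [Hout [W2 _]]]]]]]]]].
  pose proof (S_path Q SQ) as PQ.
  destruct HEM as [[_ Hcut] _].
  destruct (first_split D (psteps Q)) as [r1 [d [yd [r2 [EQ' [Dd Nr]]]]]].
  { destruct (Hcut Q PQ) as [h [Hh Dh]]. exists h. auto. }
  pose proof (Hle Q PQ _ _ (is_first_split C Q m1 c y m2 EQ Cc N1)
     (is_first_split D Q r1 d yd r2 EQ' Dd Nr)) as Hlen.
  assert (Hd : In d (pedges Q) /\ exists w, inc d w /\ ~ X w).
  { rewrite EQ in EQ'. destruct (split_cmp _ _ _ _ _ _ EQ' Hlen) as [[Eq1 _]|[k [_ Ek]]].
    - injection Eq1; intros <- <-. split.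
      + unfold Defs.pedges. rewrite EQ. apply in_fst_app_r. left; auto.
      + exists y. split; auto. destruct PQ as [[WQ _] [SQ' _]]. rewrite SQ', EQ in WQ.
        apply walk_app in WQ. destruct WQ as [_ [[_ [J _]] _]]. exact J.
    - split.
      + unfold Defs.pedges. rewrite EQ. apply in_fst_app_r. right. rewrite Ek.
        apply in_fst_app_r. left; auto.
      + assert (Hw : warc y m2 (endv y k) d yd).
        { rewrite Ek. apply warc_app. right. constructor. }
        exists yd. split.
        * apply (warc_joins _ _ _ _ _ W2 Hw).
        * apply Hout. eapply warc_vb'; eauto. }
  destruct Hd as [HdQ [w [Hw Nw]]].
  destruct (Dcut_used P0 k1 k2 v HP0 EP0 d Dd) as [P' [(P & Q' & l1 & f & y' & l2 & m1' & m2' & Hg) HdP']].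
  assert (Hfin : f = c -> exists P, L P /\ firstC P c).
  { intros <-. pose proof Hg as (LP & _ & EP & Cf & Nl1 & _). exists P. split; auto.
    exists l1, y', l2. auto. }
  pose proof (glue_facts _ _ _ _ _ _ _ _ _ Hg) as (_ & _ & _ & _ & _ & _ & _ & _ & _ & _ & _ & FQ' & _).
  pose proof Hg as (_ & SQ' & _).
  destruct (glue_class _ _ _ _ _ _ _ _ _ d Hg HdP') as [[_ Hin]|[[-> [Cf _]]|[HQ' _]]].
  - exfalso. exact (Nw (Hin w Hw)).
  - apply Hfin. apply (Cuniq Q f c SQ HdQ Cf HcQ Cc).
  - assert (Q' = Q) by (eapply S_disj; eauto). subst Q'.
    apply Hfin. pose proof Hg as (_ & _ & _ & Cf & _). apply (Cuniq Q f c SQ FQ' Cf HcQ Cc).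
Qed.

End Glue.

Lemma tight_main : tight G s t C.
Proof.
  intros S' [HL' _]. split.
  - intros P HP.
    assert (PP : stpath s t P) by (apply (proj1 (proj1 HL')); auto).
    destruct (HCcut P PP) as [h [Hh Ch]].
    destruct (first_split C (psteps P)) as [l1 [f [y [l2 [El [Cf N1]]]]]]; [exists h; auto|].
    exists f. split; [unfold Defs.pedges; rewrite El; apply in_fst_app_r; left; auto|split; auto].
    intros h' Hh' Ch'.
    destruct (cover_first S' HL' h' Ch') as [P2 [HP2 [l1' [y' [l2' [El' [_ N1']]]]]]].
    destruct (classic (P2 = P)) as [->|N].
    + rewrite El in El'. destruct (first_split_unique C l1 f y l2 l1' h' y' l2') as [_ [E1 _]]; auto.
    + exfalso. apply (proj2 (proj1 HL') P2 P HP2 HP N h'); auto.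
      unfold Defs.pedges. rewrite El'. apply in_fst_app_r. left; auto.
  - intros c Cc. destruct (cover_first S' HL' c Cc) as [P [HP [l1 [y [l2 [El _]]]]]].
    exists P. split; auto. unfold Defs.pedges. rewrite El. apply in_fst_app_r. left; auto.
Qed.

End Main.

Lemma delta_compl (Y : V -> Prop) h : delta G Y h <-> delta G (fun w => ~ Y w) h.
Proof.
  split; intros [a [b [Ha [Hb [Ya Nb]]]]].
  - exists b, a. repeat split; auto; try (apply NNPP; exact Nb).
  - exists b, a. repeat split; auto; try (apply NNPP; exact Nb).
Qed.

End Gen.

Theorem lemma3p8 (G : graph) (s t : vtx G) (e : edg G) :
  s <> t ->
  linked G s t ->
  (forall S, links G s t S -> uses G S e) ->
  ~ deltav G s e ->
  forall C : edg G -> Prop,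
    EM_stcut G s t C -> C e ->
    (forall C', EM_stcut G s t C' -> C' e -> cut_le G s t C C') ->
    tight G s t C.
Proof.
  intros Hst _ Hforce Hnd C HEM Ce Hmin.
  pose proof HEM as [[[X0 HX0] Hcut] [S [HS HSo]]].
  destruct (classic (X0 s)) as [Xs|Xs].
  - exact (tight_main G s t e Hst Hforce Hnd C X0 HX0 Xs S HS HSo Hcut Hmin).
  - assert (HX1 : forall h, C h <-> delta G (fun w => ~ X0 w) h).
    { intros h. rewrite HX0. apply delta_compl. }
    exact (tight_main G s t e Hst Hforce Hnd C _ HX1 Xs S HS HSo Hcut Hmin).
Qed.
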